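(* Let $X$ be a Minkowski plane and let $A=\{\mathbf{x}_0,\mathbf{x}_1,\dots,\mathbf{x}_{2k-1}\}\subset X$ (distinct points). Suppose that $\mathbf{x}_0\in\mathrm{FT}(A)$ and that $\mathbf{x}_0$ is a vertex of $\operatorname{conv}A$. Then $A$ is a pseudo double cluster with $\mathbf{x}_0$ as centre.
   Context: A Minkowski plane is a two-dimensional real normed space $(X,\|\cdot\|)$ with unit ball $B$. A proper exposed face of $B$ is the intersection of $B$ with a supporting line of $B$. For finite $A\subset X$, a Fermat-Torricelli (FT) point of $A$ is a minimizer of $\mathbf{x}\mapsto\sum_{\mathbf{a}\in A}\|\mathbf{x}-\mathbf{a}\|$, and $\mathrm{FT}(A)$ is the set of all FT points. A set $C=\{\mathbf{x}_1,\dots,\mathbf{x}_m,\mathbf{y}_1,\dots,\mathbf{y}_m\}$ is a double cluster with pairs $\mathbf{x}_i,\mathbf{y}_i$ if all unit vectors $\frac{\mathbf{x}_i-\mathbf{y}_i}{\|\mathbf{x}_i-\mathbf{y}_i\|}$ lie in the same proper exposed face of $B$. A set $A$ is a pseudo double cluster if $A$ is the union of a double cluster $C$, an FT point of $C$ (called the centre of the pseudo double cluster), and one further arbitrary point. *)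

(* Defs.v *)
From HB Require Import structures.
From mathcomp Require Import all_boot all_order all_algebra.
From mathcomp Require Import reals.
Set Implicit Arguments. Unset Strict Implicit. Unset Printing Implicit Defensive.
Import Order.TTheory GRing.Theory Num.Theory.
Local Open Scope ring_scope.

Section Minkowski.
Variable R : realType.
Notation pt := 'rV[R]_2.

(* N is a norm on the 2-dimensional real vector space R^2; every Minkowski
   plane is linearly isometric to such a space (R^2, N). *)
Definition is_norm (N : pt -> R) : Prop :=
  [/\ forall x, N x = 0 -> x = 0,
      forall (a : R) x, N (a *: x) = `|a| * N x
    & forall x y, N (x + y) <= N x + N y].

(* standard bilinear pairing, used to represent linear functionals *)
Definition dotp (u v : pt) : R := \sum_(i < 2) u 0 i * v 0 i.

Definition unit_ball (N : pt -> R) (z : pt) : Prop := N z <= 1.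

Definition proper_exposed_face (N : pt -> R) (F : pt -> Prop) : Prop :=
  exists (u : pt) (c : R),
    [/\ u != 0,
        (forall z, unit_ball N z -> dotp u z <= c),
        (exists z, unit_ball N z /\ dotp u z = c)
      & forall z, F z <-> (unit_ball N z /\ dotp u z = c)].

Definition FT_point (N : pt -> R) (A : seq pt) (x : pt) : Prop :=
  forall y, \sum_(a <- A) N (x - a) <= \sum_(a <- A) N (y - a).

Definition in_conv (A : seq pt) (x : pt) : Prop :=
  exists w : 'I_(size A) -> R,
    [/\ forall i, 0 <= w i, \sum_i w i = 1
      & x = \sum_i w i *: nth 0 A i].

Definition vertex_of_conv (A : seq pt) (x : pt) : Prop :=
  in_conv A x /\
  forall y z (t : R), in_conv A y -> in_conv A z -> 0 < t < 1 ->
    x = (1 - t) *: y + t *: z -> y = z.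

Definition cluster_points (m : nat) (xs ys : 'I_m -> pt) : seq pt :=
  [seq xs i | i <- enum 'I_m] ++ [seq ys i | i <- enum 'I_m].

Definition double_cluster (N : pt -> R) (m : nat) (xs ys : 'I_m -> pt) : Prop :=
  uniq (cluster_points xs ys) /\
  exists F, proper_exposed_face N F /\
    forall i, F ((N (xs i - ys i))^-1 *: (xs i - ys i)).

Definition pseudo_double_cluster (N : pt -> R) (A : seq pt) (c : pt) : Prop :=
  exists (m : nat) (xs ys : 'I_m -> pt) (p : pt),
    [/\ double_cluster N xs ys,
        FT_point N (cluster_points xs ys) c
      & forall z, z \in A <-> [\/ z \in cluster_points xs ys, z = c | z = p]].

End Minkowski.

(* Main.v *)
Require Import Defs.
From HB Require Import structures.
From mathcomp Require Import all_boot all_order all_algebra.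
From mathcomp Require Import reals.
From mathcomp Require Import classical_sets boolp.
From mathcomp Require Import ring lra zify.
Import Order.TTheory GRing.Theory Num.Theory.
Local Open Scope ring_scope.
Local Open Scope classical_set_scope.

Section Basics.
Variable R : realType.
Notation pt := 'rV[R]_2.

Lemma pt_eq (z w : pt) : z 0 0 = w 0 0 -> z 0 1 = w 0 1 -> z = w.
Proof.
move=> h0 h1; apply/rowP => j.
case: j => [[|[|n]] Hj].
- by rewrite (_ : Ordinal Hj = 0) //; apply/val_inj.
- by rewrite (_ : Ordinal Hj = 1) //; apply/val_inj.
- by [].
Qed.

Definition cr (a b : pt) : R := a 0 0 * b 0 1 - a 0 1 * b 0 0.
Definition mk2 (x y : R) : pt := \row_(j < 2) (if (j : nat) == 0%N then x else y).
Lemma mk2_0 x y : mk2 x y 0 0 = x. Proof. by rewrite mxE. Qed.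
Lemma mk2_1 x y : mk2 x y 0 1 = y. Proof. by rewrite mxE. Qed.

Lemma dotpE (u v : pt) : dotp u v = u 0 0 * v 0 0 + u 0 1 * v 0 1.
Proof.
rewrite /dotp big_ord_recr big_ord1 /=.
by congr (_ * _ + _ * _); congr (_ _ _); apply/val_inj.
Qed.

Lemma plucker (a b c : pt) : cr a c *: b = cr b c *: a + cr a b *: c.
Proof. by apply: pt_eq; rewrite !mxE /cr; ring. Qed.


Variable N : pt -> R.
Hypothesis hN : is_norm N.

Lemma NZ a x : N (a *: x) = `|a| * N x.
Proof. by case: hN. Qed.
Lemma Ntri x y : N (x + y) <= N x + N y.
Proof. by case: hN. Qed.
Lemma N0 : N 0 = 0.
Proof. by rewrite -(scale0r 0) NZ normr0 mul0r. Qed.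
Lemma NN x : N (- x) = N x.
Proof. by rewrite -scaleN1r NZ normrN normr1 mul1r. Qed.
Lemma Nge0 x : 0 <= N x.
Proof.
have := Ntri x (- x); rewrite subrr N0 NN => h.
by rewrite -(@pmulr_rge0 _ 2) //; lra.
Qed.
Lemma NB x y : N (x - y) = N (y - x).
Proof. by rewrite -NN opprB. Qed.
Lemma Ngt0 x : x != 0 -> 0 < N x.
Proof.
move=> hx; rewrite lt_neqAle Nge0 andbT; apply/eqP => h.
by case: hN => h0 _ _; move/eqP: hx; apply; apply: h0.
Qed.
Lemma Nunit x : x != 0 -> N ((N x)^-1 *: x) = 1.
Proof.
move=> hx; have hp := Ngt0 x hx.
by rewrite NZ ger0_norm ?invr_ge0 ?ltW // mulVf // gt_eqF.
Qed.
Lemma Nsub x y : N x - N y <= N (x - y).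
Proof. have := Ntri (x - y) y; rewrite subrK; lra. Qed.


Lemma u_sq_gt0 {u : pt} : u != 0 -> 0 < u 0 0 ^+ 2 + u 0 1 ^+ 2.
Proof.
move=> hu; rewrite lt_neqAle addr_ge0 ?sqr_ge0 // andbT.
apply/eqP => h; move/eqP: hu; apply; apply: pt_eq; rewrite !mxE.
- have : u 0 0 ^+ 2 = 0 by have := sqr_ge0 (u 0 0); have := sqr_ge0 (u 0 1); lra.
  by move/eqP; rewrite sqrf_eq0 => /eqP.
- have : u 0 1 ^+ 2 = 0 by have := sqr_ge0 (u 0 0); have := sqr_ge0 (u 0 1); lra.
  by move/eqP; rewrite sqrf_eq0 => /eqP.
Qed.

Lemma norm1_neq0 {u : pt} : N u = 1 -> u != 0.
Proof. by move=> h; apply/eqP => hu; move: h; rewrite hu N0 => /eqP; rewrite eq_sym oner_eq0. Qed.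

Lemma support (u : pt) : N u = 1 ->
  exists G : pt, (forall z, dotp G z <= N z) /\ dotp G u = 1.
Proof.
move=> hu1; have hu := norm1_neq0 hu1.
set e := mk2 (- u 0 1) (u 0 0).
set D := cr u e.
have hD : 0 < D by rewrite /D /cr mk2_0 mk2_1; have := u_sq_gt0 hu; lra.
have key : forall a a', a - N (a *: u - e) <= N (a' *: u + e) - a'.
  move=> a a'.
  have : N ((a + a') *: u) <= N (a *: u - e) + N (a' *: u + e).
    have -> : (a + a') *: u = (a *: u - e) + (a' *: u + e).
      by apply: pt_eq; rewrite !mxE; ring.
    exact: Ntri.
  rewrite NZ hu1 mulr1 => h; have := ler_norm (a + a'); lra.
set E := [set x : R | exists a, x = a - N (a *: u - e)].
have hE0 : E !=set0 by exists (0 - N (0 *: u - e)); exists 0.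
have hsup : has_sup E.
  split => //; exists (N (0 *: u + e) - 0) => x [a ->]; exact: key.
set s := sup E.
have Hs1 : forall a, a - N (a *: u - e) <= s.
  by move=> a; apply: (sup_upper_bound hsup); exists a.
have Hs2 : forall a', s <= N (a' *: u + e) - a'.
  by move=> a'; apply: ge_sup => // x [a ->]; exact: key.
exists (mk2 ((e 0 1 - s * u 0 1) / D) ((s * u 0 0 - e 0 0) / D)).
split; last first.
  rewrite dotpE !mk2_0 !mk2_1 /D /cr /e !mk2_0 !mk2_1.
  by field; have := u_sq_gt0 hu; lra.
move=> z.
set a := cr z e / D; set b := cr u z / D.
have hz : z = a *: u + b *: e.
  apply/(scalerI (lt0r_neq0 hD)); rewrite /D plucker scalerDr !scalerA.
  by rewrite /a /b !(mulrC (cr u e)) !divfK ?lt0r_neq0.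
have hg : dotp (mk2 ((e 0 1 - s * u 0 1) / D) ((s * u 0 0 - e 0 0) / D)) z
          = a + s * b.
  rewrite dotpE !mk2_0 !mk2_1 /a /b.
  rewrite /e /D /cr !mk2_0 !mk2_1; field; have := u_sq_gt0 hu; lra.
rewrite hg; clearbody a b; subst z.
have [bneg|[bpos|->]] : b < 0 \/ 0 < b \/ b = 0 by lra.
- have hb : 0 < - b by lra.
  have -> : a *: u + b *: e = (- b) *: ((a / (- b)) *: u - e).
    apply: pt_eq; rewrite !mxE; field; lra.
  rewrite NZ (ger0_norm (ltW hb)).
  have := Hs1 (a / (- b)) => h.
  have : - b * (a / - b - s) <= - b * N (a / - b *: u - e) by rewrite ler_pM2l //; lra.
  have -> : - b * (a / - b - s) = a + s * b by field; lra.
  exact: id.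
- have -> : a *: u + b *: e = b *: ((a / b) *: u + e).
    apply: pt_eq; rewrite !mxE; field; lra.
  rewrite NZ (ger0_norm (ltW bpos)).
  have := Hs2 (a / b) => h.
  have : b * (s + a / b) <= b * N (a / b *: u + e) by rewrite ler_pM2l //; lra.
  have -> : b * (s + a / b) = a + s * b by field; lra.
  exact: id.
- rewrite scale0r addr0 mulr0 addr0 NZ hu1 mulr1; exact: ler_norm.
Qed.


Lemma tight2 (X Y : pt) a b : N X = 1 -> N Y = 1 -> 0 < a -> 0 < b ->
  N (a *: X - b *: Y) = a + b -> N (X - Y) = 2.
Proof.
move=> hX hY ha hb h.
have up : N (X - Y) <= 2 by have := Ntri X (- Y); rewrite NN; lra.
have [hab|hab] := lerP a b.
- have := Ntri (a *: (X - Y)) (- ((b - a) *: Y)).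
  have -> : a *: (X - Y) + - ((b - a) *: Y) = a *: X - b *: Y.
    by apply: pt_eq; rewrite !mxE; ring.
  rewrite h NN !NZ hY (ger0_norm (ltW ha)) ger0_norm; last lra.
  move=> h2; have : a * 2 <= a * N (X - Y) by lra.
  rewrite ler_pM2l //; lra.
- have := Ntri (b *: (X - Y)) ((a - b) *: X).
  have -> : b *: (X - Y) + ((a - b) *: X) = a *: X - b *: Y.
    by apply: pt_eq; rewrite !mxE; ring.
  rewrite h !NZ hX (ger0_norm (ltW hb)) ger0_norm; last lra.
  move=> h2; have : b * 2 <= b * N (X - Y) by lra.
  rewrite ler_pM2l //; lra.
Qed.

Lemma sumle (x y : pt) : N x = 1 -> N y = 1 -> N (x + y) = 2 ->
  forall a b, a + b <= N (a *: x + b *: y).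
Proof.
move=> hx hy hxy a b.
have [hab|hab] := lerP a b.
- have [b0|b0] := lerP 0 b; last by have := Nge0 (a *: x + b *: y); lra.
  have := Ntri (a *: x + b *: y) ((b - a) *: x).
  have -> : a *: x + b *: y + (b - a) *: x = b *: (x + y).
    by apply: pt_eq; rewrite !mxE; ring.
  by rewrite !NZ hx hxy (ger0_norm b0) ger0_norm; lra.
- have [a0|a0] := lerP 0 a; last by have := Nge0 (a *: x + b *: y); lra.
  have := Ntri (a *: x + b *: y) ((a - b) *: y).
  have -> : a *: x + b *: y + (a - b) *: y = a *: (x + y).
    by apply: pt_eq; rewrite !mxE; ring.
  by rewrite !NZ hy hxy (ger0_norm a0) ger0_norm; lra.
Qed.

Lemma eqsum (x y : pt) : N x = 1 -> N y = 1 -> N (x + y) = 2 ->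
  forall a b, 0 <= a -> 0 <= b -> N (a *: x + b *: y) = a + b.
Proof.
move=> hx hy hxy a b ha hb; apply/eqP; rewrite eq_le sumle // andbT.
by have := Ntri (a *: x) (b *: y); rewrite !NZ hx hy !ger0_norm //; lra.
Qed.


Lemma scale_solve {D : R} {v w : pt} : D != 0 -> D *: v = w -> v = D^-1 *: w.
Proof. by move=> hD <-; rewrite scalerA mulVf // scale1r. Qed.

Definition dote (a v : pt) := a 0 0 * v 0 0 + a 0 1 * v 0 1.

Lemma parallel {a v : pt} : a != 0 -> cr a v = 0 ->
  v = (dote a v / (a 0 0 ^+ 2 + a 0 1 ^+ 2)) *: a.
Proof.
move=> ha hc.
have hs := u_sq_gt0 ha.
have E : (a 0 0 ^+ 2 + a 0 1 ^+ 2) *: v = dote a v *: a + cr a v *: mk2 (- a 0 1) (a 0 0).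
  by apply: pt_eq; rewrite !mxE /dote /cr /=; ring.
rewrite hc scale0r addr0 in E.
rewrite {1}(scale_solve _ E); last exact: lt0r_neq0.
by rewrite scalerA mulrC.
Qed.

Definition cone_inv (l : seq pt) :=
 (exists a, a \in l /\ forall w, w \in l -> exists c, 0 < c /\ w = c *: a) \/
 (exists a b, [/\ a \in l, b \in l, 0 < cr a b &
     forall w, w \in l -> exists p q, [/\ 0 <= p, 0 <= q & w = p *: a + q *: b]]).

Definition bad (l : seq pt) :=
 (exists v w c, [/\ v \in l, w \in l, 0 < c & w = - (c *: v)]) \/
 (exists u v w, exists a b c, [/\ u \in l, v \in l & w \in l] /\
     [/\ 0 < a, 0 < b, 0 < c & a *: u + b *: v + c *: w = 0]).

Lemma bad_cons v l : bad l -> bad (v :: l).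
Proof.
case=> [[x [w [c [h1 h2 h3 h4]]]]|[u [x [w [a [b [c [[h1 h2 h3] H]]]]]]]].
- by left; exists x, w, c; split => //; rewrite inE ?h1 ?h2 orbT.
- by right; exists u, x, w, a, b, c; split => //; split; rewrite inE ?h1 ?h2 ?h3 orbT.
Qed.

Lemma gordan_ind (l : seq pt) : l != [::] -> all (fun v => v != 0) l -> cone_inv l \/ bad l.
Proof.
elim: l => [//|v l IH] _ /= /andP [hv hl].
have [->|lne] := eqVneq l [::].
  left; left; exists v; split; first by rewrite inE.
  by move=> w; rewrite inE => /eqP ->; exists 1; rewrite scale1r ltr01.
case: (IH lne hl) => [[[a [ha Hm]]|[a [b [ha hb hD Hc]]]]|hbad]; last first.
- by right; apply: bad_cons.
-
  set D := cr a b; set p := cr a v; set q := cr v b.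
  have E : D *: v = q *: a + p *: b by rewrite /D /p /q plucker.
  have hD0 : D != 0 by apply: lt0r_neq0.
  have [p0|p0] := lerP 0 p; have [q0|q0] := lerP 0 q.
  + left; right; exists a, b; split; rewrite ?inE ?ha ?hb ?orbT //.
    move=> w; rewrite inE => /orP [/eqP ->|/Hc //].
    exists (q / D), (p / D); split; [exact: divr_ge0 q0 (ltW hD)|exact: divr_ge0 p0 (ltW hD)|].
    rewrite {1}(scale_solve _ E) // scalerDr !scalerA; congr (_ *: _ + _ *: _); apply: mulrC.
  + have [pp|pz] : 0 < p \/ p = 0 by lra.
    * left; right; exists a, v; split; rewrite ?inE ?ha ?eqxx ?orbT //.
      move=> w; rewrite inE => /orP [/eqP ->|/Hc [P [Q [hP hQ ->]]]].
        by exists 0, 1; rewrite scale0r add0r scale1r; split => //; apply: ler01.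
      have Eb : cr a v *: b = cr b v *: a + cr a b *: v by rewrite plucker.
      have hb' : b = (p^-1 * cr b v) *: a + (p^-1 * D) *: v.
        by rewrite {1}(scale_solve (lt0r_neq0 pp) Eb) scalerDr !scalerA.
      have hbv : cr b v = - q by rewrite /q /cr; ring.
      exists (P + Q * (p^-1 * cr b v)), (Q * (p^-1 * D)); split.
      - by rewrite hbv addr_ge0 // mulr_ge0 // mulr_ge0 ?invr_ge0 ?ltW //; lra.
      - by rewrite mulr_ge0 // mulr_ge0 ?invr_ge0 ?ltW.
      rewrite {1}hb'; apply: pt_eq; rewrite !mxE; ring.
    * right; left; exists a, v, (- q / D); split; rewrite ?inE ?ha ?eqxx ?orbT //.
        by rewrite divr_gt0 //; lra.
      rewrite pz scale0r addr0 in E; rewrite {1}(scale_solve hD0 E) scalerA.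
      by apply: pt_eq; rewrite !mxE; field.
  + have [qp|qz] : 0 < q \/ q = 0 by lra.
    * left; right; exists v, b; split; rewrite ?inE ?hb ?eqxx ?orbT //.
      move=> w; rewrite inE => /orP [/eqP ->|/Hc [P [Q [hP hQ ->]]]].
        by exists 1, 0; rewrite scale0r addr0 scale1r; split => //; apply: ler01.
      have Ea : cr v b *: a = cr a b *: v + cr v a *: b by rewrite plucker.
      have ha' : a = (q^-1 * D) *: v + (q^-1 * cr v a) *: b.
        by rewrite {1}(scale_solve (lt0r_neq0 qp) Ea) scalerDr !scalerA.
      have hva : cr v a = - p by rewrite /p /cr; ring.
      exists (P * (q^-1 * D)), (P * (q^-1 * cr v a) + Q); split.
      - by rewrite mulr_ge0 // mulr_ge0 ?invr_ge0 ?ltW.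
      - by rewrite hva addr_ge0 // mulr_ge0 // mulr_ge0 ?invr_ge0 ?ltW //; lra.
      rewrite {1}ha'; apply: pt_eq; rewrite !mxE; ring.
    * right; left; exists b, v, (- p / D); split; rewrite ?inE ?hb ?eqxx ?orbT //.
        by rewrite divr_gt0 //; lra.
      rewrite qz scale0r add0r in E; rewrite {1}(scale_solve hD0 E) scalerA.
      by apply: pt_eq; rewrite !mxE; field.
  + right; right; exists a, b, v, (- q), (- p), D; split; first by split; rewrite ?inE ?ha ?hb ?eqxx ?orbT.
    split; [lra|lra|exact: hD|].
    by rewrite E; apply: pt_eq; rewrite !mxE; ring.
-
  set p := cr a v.
  have ha0 : a != 0.
    by apply/eqP => h; move: hl => /allP /(_ a ha); rewrite h eqxx.
  have [pp|[pn|pz]] : 0 < p \/ p < 0 \/ p = 0 by lra.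
  + left; right; exists a, v; split; rewrite ?inE ?ha ?eqxx ?orbT //.
    move=> w; rewrite inE => /orP [/eqP ->|/Hm [c [hc ->]]].
      by exists 0, 1; rewrite scale0r add0r scale1r; split => //; apply: ler01.
    by exists c, 0; rewrite scale0r addr0; split => //; rewrite ltW.
  + left; right; exists v, a; split; rewrite ?inE ?ha ?eqxx ?orbT //.
      by rewrite /cr; rewrite /p /cr in pn; lra.
    move=> w; rewrite inE => /orP [/eqP ->|/Hm [c [hc ->]]].
      by exists 1, 0; rewrite scale0r addr0 scale1r; split => //; apply: ler01.
    by exists 0, c; rewrite scale0r add0r; split => //; rewrite ltW.
  + have hva := parallel ha0 pz.
    set c := dote a v / (a 0 0 ^+ 2 + a 0 1 ^+ 2) in hva.
    have [cp|[cn|cz]] : 0 < c \/ c < 0 \/ c = 0 by lra.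
    * left; left; exists a; split; rewrite ?inE ?ha ?orbT //.
      move=> w; rewrite inE => /orP [/eqP ->|/Hm //].
      by exists c.
    * right; left; exists a, v, (- c); split; rewrite ?inE ?ha ?eqxx ?orbT //; first lra.
      by rewrite {1}hva scaleNr opprK.
    * by move: hv; rewrite hva cz scale0r eqxx.
Qed.


Lemma cone_phi (l : seq pt) : all (fun v => v != 0) l -> cone_inv l ->
  exists f : pt, forall v, v \in l -> 0 < dote f v.
Proof.
move=> /allP hl [[a [ha Hm]]|[a [b [ha hb hD Hc]]]].
- exists a => v /Hm [c [hc ->]].
  have := u_sq_gt0 (hl a ha); rewrite /dote !mxE => h.
  have -> : a 0 0 * (c * a 0 0) + a 0 1 * (c * a 0 1) = c * (a 0 0 ^+ 2 + a 0 1 ^+ 2) by ring.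
  exact: mulr_gt0.
- exists (mk2 (b 0 1 - a 0 1) (a 0 0 - b 0 0)) => v hv.
  have [p [q [hp hq hvpq]]] := Hc v hv.
  have hv0 := hl v hv.
  have -> : dote (mk2 (b 0 1 - a 0 1) (a 0 0 - b 0 0)) v = (p + q) * cr a b.
    by rewrite /dote !mk2_0 !mk2_1 hvpq !mxE /cr; ring.
  apply: mulr_gt0 => //.
  have [//|h0] := ltrP 0 (p + q).
  have p0 : p = 0 by lra.
  have q0 : q = 0 by lra.
  by move: hv0; rewrite hvpq p0 q0 !scale0r addr0 eqxx.
Qed.

Lemma in_conv_mem {A : seq pt} {a} : a \in A -> in_conv A a.
Proof.
move=> ha; have hi : (index a A < size A)%N by rewrite index_mem.
pose i0 := Ordinal hi.
exists (fun i : 'I_(size A) => (i == i0)%:R); split.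
- by move=> i; rewrite ler0n.
- by rewrite (bigD1 i0) //= eqxx big1 ?addr0 // => i /negbTE ->.
- rewrite (bigD1 i0) //= eqxx scale1r big1 ?addr0 ?nth_index //.
  by move=> i /negbTE ->; rewrite scale0r.
Qed.

Lemma in_conv_comb (A : seq pt) y z t : in_conv A y -> in_conv A z -> 0 <= t <= 1 ->
  in_conv A ((1 - t) *: y + t *: z).
Proof.
move=> [wy [hy1 hy2 ->]] [wz [hz1 hz2 ->]] /andP [t0 t1].
exists (fun i => (1 - t) * wy i + t * wz i); split.
- by move=> i; rewrite addr_ge0 // mulr_ge0 //; lra.
- by rewrite big_split /= -!mulr_sumr hy2 hz2; ring.
- rewrite !scaler_sumr -big_split /=; apply: eq_bigr => i _.
  by rewrite !scalerA -scalerDl.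
Qed.

Lemma no_bad (A : seq pt) x0 (l : seq pt) : vertex_of_conv A x0 ->
  (forall v, v \in l -> v != 0 /\ x0 - v \in A) -> ~ bad l.
Proof.
move=> [_ hvx] hl [[v [w [c [hv hw hc hwv]]]]|[u [v [w [a [b [c [[hu hv hw] [ha hb hc H]]]]]]]]].
- have [hv0 hvA] := hl v hv; have [hw0 hwA] := hl w hw.
  have ht : 0 < c / (1 + c) < 1.
    apply/andP; split; first by rewrite divr_gt0 //; lra.
    by rewrite ltr_pdivrMr; lra.
  have := hvx _ _ _ (in_conv_mem hwA) (in_conv_mem hvA) ht.
  have e : x0 = (1 - c / (1 + c)) *: (x0 - w) + c / (1 + c) *: (x0 - v).
    by rewrite hwv; apply: pt_eq; rewrite !mxE; field; lra.
  move=> /(_ e) /eqP; rewrite (inj_eq (addrI x0)) (inj_eq oppr_inj) => /eqP hvw.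
  move: hwv; rewrite -hvw => /eqP; rewrite -subr_eq0 opprK -{1}(scale1r w) -scalerDl.
  by rewrite scaler_eq0 (negbTE hw0) orbF; lra.
- have [hu0 huA] := hl u hu; have [hv0 hvA] := hl v hv; have [hw0 hwA] := hl w hw.
  have E : c *: w = - (a *: u + b *: v).
    by apply/eqP; rewrite -addr_eq0 addrC; apply/eqP.
  have hw' := scale_solve (lt0r_neq0 hc) E.
  set y := (1 - b / (a + b)) *: (x0 - u) + b / (a + b) *: (x0 - v).
  have hy : in_conv A y.
    apply: in_conv_comb; [exact: in_conv_mem huA|exact: in_conv_mem hvA|].
    apply/andP; split; first by rewrite divr_ge0 //; lra.
    by rewrite ler_pdivrMr; lra.
  have ht : 0 < c / (a + b + c) < 1.
    apply/andP; split; first by rewrite divr_gt0 //; lra.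
    by rewrite ltr_pdivrMr; lra.
  have := hvx _ _ _ hy (in_conv_mem hwA) ht.
  have e : x0 = (1 - c / (a + b + c)) *: y + c / (a + b + c) *: (x0 - w).
    rewrite /y hw'; apply: pt_eq; rewrite !mxE; field; by apply/and3P; split; apply: lt0r_neq0; lra.
  move=> /(_ e) hyw.
  move: e; rewrite hyw -scalerDl subrK scale1r => /eqP.
  by rewrite -subr_eq0 opprB addrC subrK (negbTE hw0).
Qed.


Lemma get_phi (A : seq pt) x0 : uniq A -> x0 \in A -> (1 < size A)%N -> vertex_of_conv A x0 ->
  exists f : pt, forall a, a \in rem x0 A -> 0 < dote f (x0 - a).
Proof.
move=> uA hx0 hsz hv.
set l := [seq x0 - a | a <- rem x0 A].
have hmem : forall v, v \in l -> v != 0 /\ x0 - v \in A.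
  move=> v /mapP [a ha ->]; move: ha; rewrite (mem_rem_uniq _ uA) inE => /andP [hax haA].
  split; last by rewrite opprB addrC subrK.
  by rewrite subr_eq0 eq_sym.
have hall : all (fun v => v != 0) l by apply/allP => v /hmem [].
have lne : l != [::].
  by rewrite -size_eq0 size_map size_rem //; case: (size A) hsz => [|[|]].
case: (gordan_ind l lne hall) => [hc|hb]; last by exfalso; exact: (no_bad _ _ _ hv hmem hb).
have [f hf] := cone_phi l hall hc.
by exists f => a ha; apply: hf; apply: map_f.
Qed.


Lemma dote_lin (f a b : pt) x y : dote f (x *: a + y *: b) = x * dote f a + y * dote f b.
Proof. by rewrite /dote !mxE; ring. Qed.

Lemma par_P (f a c : pt) : 0 < dote f a -> cr a c = 0 -> c = (dote f c / dote f a) *: a.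
Proof.
move=> ha hc.
have E : dote f a *: c = dote f c *: a + cr a c *: mk2 (- f 0 1) (f 0 0).
  by apply: pt_eq; rewrite !mxE /dote /cr /=; ring.
rewrite hc scale0r addr0 in E.
rewrite {1}(scale_solve (lt0r_neq0 ha) E).
by rewrite scalerA mulrC.
Qed.

Definition lamc (f a b c : pt) := if cr a b == 0 then dote f c / dote f a else cr c b / cr a b.
Definition muc (a b c : pt) := if cr a b == 0 then 0 else cr a c / cr a b.

Lemma cone_spec (f a b c : pt) : 0 < dote f a -> 0 < dote f b -> 0 < dote f c ->
  0 <= cr a c -> 0 <= cr c b ->
  [/\ 0 <= lamc f a b c, 0 <= muc a b c & c = lamc f a b c *: a + muc a b c *: b].
Proof.
move=> ha hb hc hac hcb.
have E : cr a b *: c = cr c b *: a + cr a c *: b by rewrite plucker.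
have E' : cr a b * dote f c = cr c b * dote f a + cr a c * dote f b.
  by rewrite /dote /cr; ring.
have hab : 0 <= cr a b.
  have : 0 <= cr a b * dote f c.
    rewrite E'.
    by apply: addr_ge0; apply: mulr_ge0 => //; apply: ltW.
  by rewrite pmulr_lge0.
rewrite /lamc /muc; case: eqP => [h0|h0].
- have hac0 : cr a c = 0.
    have : cr c b * dote f a + cr a c * dote f b = 0.
      by rewrite -E' h0 mul0r.
    have := mulr_ge0 hcb (ltW ha); have := mulr_ge0 hac (ltW hb) => h1 h2 h3.
    have : cr a c * dote f b = 0 by lra.
    by move/eqP; rewrite mulf_eq0 (gt_eqF hb) orbF => /eqP.
  split; [by rewrite divr_ge0 // ltW | by [] |].
  by rewrite scale0r addr0; apply: par_P.
- have hab' : 0 < cr a b by rewrite lt_neqAle eq_sym hab andbT; apply/eqP.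
  split; [by rewrite divr_ge0 // ltW | by rewrite divr_ge0 // ltW |].
  rewrite {1}(scale_solve (lt0r_neq0 hab') E) scalerDr !scalerA.
  by congr (_ *: _ + _ *: _); rewrite mulrC.
Qed.

Definition un (v : pt) := (N v)^-1 *: v.

Lemma unK v : v != 0 -> N v *: un v = v.
Proof. by move=> hv; rewrite /un scalerA mulfV ?scale1r // gt_eqF // Ngt0. Qed.

Lemma Nun v : v != 0 -> N (un v) = 1.
Proof. exact: Nunit. Qed.

Lemma crZ a b (c d : R) : cr (c *: a) (d *: b) = c * d * cr a b.
Proof. by rewrite /cr !mxE; ring. Qed.

Lemma crNl a b : cr (- a) b = - cr a b.
Proof. by rewrite /cr !mxE; ring. Qed.
Lemma crNr a b : cr a (- b) = - cr a b.
Proof. by rewrite /cr !mxE; ring. Qed.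
Lemma cr_anti a b : cr a b = - cr b a.
Proof. by rewrite /cr; ring. Qed.

Lemma cr_un a b : a != 0 -> b != 0 -> cr (un a) (un b) = cr a b / (N a * N b).
Proof.
move=> ha hb; rewrite /un crZ.
by field; apply/andP; split; apply: lt0r_neq0; apply: Ngt0.
Qed.

Lemma pairB {vl vr vm : pt} {lam mu t : R} : 0 <= lam -> 0 <= mu -> vm = lam *: vl + mu *: vr ->
  0 <= t -> t * lam <= 1 -> t * mu <= 1 ->
  N (vl - t *: vm) <= (1 - t * lam) * N vl + t * mu * N vr /\
  N (vr - t *: vm) <= (1 - t * mu) * N vr + t * lam * N vl.
Proof.
move=> hl hm -> ht h1 h2; split.
- have -> : vl - t *: (lam *: vl + mu *: vr) = (1 - t * lam) *: vl + (- (t * mu)) *: vr.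
    by apply: pt_eq; rewrite !mxE; ring.
  apply: le_trans (Ntri _ _) _; rewrite !NZ normrN !ger0_norm //; last lra.
  exact: mulr_ge0.
- have -> : vr - t *: (lam *: vl + mu *: vr) = (1 - t * mu) *: vr + (- (t * lam)) *: vl.
    by apply: pt_eq; rewrite !mxE; ring.
  apply: le_trans (Ntri _ _) _; rewrite !NZ normrN !ger0_norm //; last lra.
  exact: mulr_ge0.
Qed.

Lemma pair_tight {vl vr vm : pt} {lam mu t : R} : 0 <= lam -> 0 <= mu -> vm = lam *: vl + mu *: vr ->
  0 < t -> t * lam < 1 -> t * mu < 1 -> vl != 0 -> vr != 0 -> vm != 0 ->
  N vl + N vr <= N (vl - t *: vm) + N (vr - t *: vm) ->
  N (un vl - un vr) = 2.
Proof.
move=> hl hm hvm ht h1 h2 hl0 hr0 hm0 hge.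
have [b1 b2] := pairB hl hm hvm (ltW ht) (ltW h1) (ltW h2).
have nl := Ngt0 _ hl0; have nr := Ngt0 _ hr0.
have [mp|mz] : 0 < mu \/ mu = 0 by lra.
- have e1 : N (vl - t *: vm) = (1 - t * lam) * N vl + t * mu * N vr.
    apply/eqP; rewrite eq_le b1 /=.
    have : N (vr - t *: vm) <= (1 - t * mu) * N vr + t * lam * N vl by [].
    move=> b2'; nra.
  apply: (@tight2 _ _ ((1 - t * lam) * N vl) (t * mu * N vr)).
  + exact: Nun.
  + exact: Nun.
  + by apply: mulr_gt0 => //; lra.
  + by apply: mulr_gt0 => //; apply: mulr_gt0.
  + have -> : (1 - t * lam) * N vl *: un vl - t * mu * N vr *: un vr = vl - t *: vm.
      rewrite -!scalerA !unK // hvm; apply: pt_eq; rewrite !mxE; ring.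
    by rewrite e1.
- have lp : 0 < lam.
    have [//|l0] := ltrP 0 lam.
    have l00 : lam = 0 by lra.
    by move: hm0; rewrite hvm l00 mz !scale0r addr0 eqxx.
  have e2 : N (vr - t *: vm) = (1 - t * mu) * N vr + t * lam * N vl.
    apply/eqP; rewrite eq_le b2 /=; nra.
  rewrite NB.
  apply: (@tight2 _ _ ((1 - t * mu) * N vr) (t * lam * N vl)).
  + exact: Nun.
  + exact: Nun.
  + by apply: mulr_gt0 => //; lra.
  + by apply: mulr_gt0 => //; apply: mulr_gt0.
  + have -> : (1 - t * mu) * N vr *: un vr - t * lam * N vl *: un vl = vr - t *: vm.
      rewrite -!scalerA !unK // hvm; apply: pt_eq; rewrite !mxE; ring.
    by rewrite e2.
Qed.

Definition Gof (x y : pt) : pt := mk2 ((y 0 1 - x 0 1) / cr x y) ((x 0 0 - y 0 0) / cr x y).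

Lemma GofE x y z : cr x y != 0 -> dotp (Gof x y) z = (cr z y + cr x z) / cr x y.
Proof. by move=> h; rewrite dotpE /Gof !mk2_0 !mk2_1 /cr; field. Qed.

Lemma decomp x y z : cr x y != 0 -> z = (cr z y / cr x y) *: x + (cr x z / cr x y) *: y.
Proof.
move=> h; have E : cr x y *: z = cr z y *: x + cr x z *: y by rewrite plucker.
rewrite {1}(scale_solve h E) scalerDr !scalerA.
by congr (_ *: _ + _ *: _); rewrite mulrC.
Qed.

Lemma Gle x y z : N x = 1 -> N y = 1 -> N (x + y) = 2 -> cr x y != 0 ->
  dotp (Gof x y) z <= N z.
Proof.
move=> hx hy hxy h; rewrite GofE // mulrDl {3}(decomp x y z h).
exact: sumle.
Qed.

Lemma Gval x y z : N x = 1 -> N y = 1 -> N (x + y) = 2 -> cr x y != 0 ->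
  0 <= cr z y / cr x y -> 0 <= cr x z / cr x y -> dotp (Gof x y) z = N z.
Proof.
move=> hx hy hxy h ha hb; rewrite GofE // mulrDl {3}(decomp x y z h).
by rewrite eqsum.
Qed.


Lemma split_sum (s : seq pt) K (F : pt -> R) : size s = (K.+1 + K)%N ->
  \sum_(a <- s) F a =
  F (nth 0 s K) + \sum_(i < K) (F (nth 0 s (i + K.+1)) + F (nth 0 s (K - i.+1))).
Proof.
move=> hs; rewrite (big_nth 0) hs.
rewrite (@big_cat_nat _ _ _ K) //=; last by lia.
rewrite (@big_ltn _ _ _ K); last by lia.
rewrite -{1}(add0n K.+1) big_addn addKn.
rewrite big_nat_rev /= add0n.
rewrite addrCA; congr (_ + _).
rewrite addrC -big_split /= big_mkord; apply: eq_bigr => i _ //.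
Qed.


Lemma unZ (c : R) w : 0 < c -> w != 0 -> un (c *: w) = un w.
Proof.
move=> hc hw; rewrite /un NZ ger0_norm ?ltW // scalerA invfM mulrAC mulVf ?mul1r //.
exact: lt0r_neq0.
Qed.

Lemma dotpZ (G z : pt) c : dotp G (c *: z) = c * dotp G z.
Proof. by rewrite !dotpE !mxE; ring. Qed.

Lemma cr_self x : cr x x = 0.
Proof. by rewrite /cr; ring. Qed.

Lemma negdiv (a D : R) : a <= 0 -> D < 0 -> 0 <= a / D.
Proof. by move=> ha hD; apply: mulr_le0 => //; rewrite ltW // invr_lt0. Qed.

Lemma mainG (x0 : pt) (s : seq pt) (K : nat) (f : pt) :
  let v j := x0 - nth 0 s j in
  size s = (K.+1 + K)%N -> (0 < K)%N ->
  (forall j, (j < size s)%N -> 0 < dote f (v j)) ->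
  (forall i j, (i <= j)%N -> (j < size s)%N -> 0 <= cr (v i) (v j)) ->
  (forall y, \sum_(a <- s) N (x0 - a) <= N (y - x0) + \sum_(a <- s) N (y - a)) ->
  exists G : pt, [/\ forall z, dotp G z <= N z,
     exists z, N z <= 1 /\ dotp G z = 1,
     forall j, (j < K)%N -> dotp G (v j) = N (v j) &
     forall j, (K < j)%N -> (j < size s)%N -> dotp G (v j) = - N (v j)].
Proof.
move=> v hs hK hP hord hFT.
have hv0 : forall j, (j < size s)%N -> v j != 0.
  move=> j hj; apply/eqP => h; have := hP j hj.
  by rewrite h /dote !mxE !mulr0 addr0 ltxx.
pose lam (i : 'I_K) := lamc f (v (K - i.+1)%N) (v (i + K.+1)%N) (v K).
pose mu (i : 'I_K) := muc (v (K - i.+1)%N) (v (i + K.+1)%N) (v K).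
have hspec : forall i : 'I_K, [/\ 0 <= lam i, 0 <= mu i &
    v K = lam i *: v (K - i.+1)%N + mu i *: v (i + K.+1)%N].
  move=> i; have hi := ltn_ord i.
  apply: cone_spec; try apply: hP; try apply: hord; rewrite ?hs; lia.
pose T := \sum_(i < K) (lam i + mu i).
have hT : forall i, lam i <= T /\ mu i <= T.
  move=> i; have [l0 m0 _] := hspec i.
  have : lam i + mu i <= T.
    rewrite /T (bigD1 i) //= lerDl; apply: sumr_ge0 => j _.
    by have [l1 m1 _] := hspec j; apply: addr_ge0.
  by move=> h; split; lra.
have T0 : 0 <= T by apply: sumr_ge0 => j _; have [l1 m1 _] := hspec j; apply: addr_ge0.
pose t := (2 + T)^-1.
have t0 : 0 < t by rewrite /t invr_gt0; lra.
have ht1 : forall a, 0 <= a -> a <= T -> t * a < 1.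
  move=> a a0 aT; rewrite /t mulrC ltr_pdivrMr; lra.
have tlt1 : t < 1 by have := ht1 0 (lexx 0) T0; rewrite mulr0 => _; rewrite /t invf_lt1; lra.
have := hFT (x0 - t *: v K).
rewrite (split_sum _ _ _ hs) (split_sum _ _ _ hs).
have -> : x0 - t *: v K - x0 = - (t *: v K) by rewrite addrAC subrr add0r.
rewrite NN NZ (ger0_norm (ltW t0)).
have -> : x0 - t *: v K - nth 0 s K = (1 - t) *: v K.
  by rewrite /v; apply: pt_eq; rewrite !mxE; ring.
rewrite NZ (ger0_norm (_ : 0 <= 1 - t)); last lra.
have hy : forall j, x0 - t *: v K - nth 0 s j = v j - t *: v K.
  by move=> j; rewrite /v addrAC.
under [X in _ <= _ + (_ + X)]eq_bigr do rewrite !hy.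
rewrite -/(v K) => hsum.
have hsum2 : \sum_(i < K) (N (v (i + K.+1)%N) + N (v (K - i.+1)%N)) <=
             \sum_(i < K) (N (v (i + K.+1)%N - t *: v K) + N (v (K - i.+1)%N - t *: v K)).
  move: hsum; rewrite /v; lra.
have hb : forall i : 'I_K, N (v (i + K.+1)%N - t *: v K) + N (v (K - i.+1)%N - t *: v K)
                         <= N (v (i + K.+1)%N) + N (v (K - i.+1)%N).
  move=> i; have [l0 m0 e] := hspec i; have [lT mT] := hT i.
  have [b1 b2] := pairB l0 m0 e (ltW t0) (ltW (ht1 _ l0 lT)) (ltW (ht1 _ m0 mT)).
  lra.
pose i0 : 'I_K := Ordinal hK.
have hge : N (v K.-1) + N (v K.+1) <=
           N (v K.-1 - t *: v K) + N (v K.+1 - t *: v K).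
  move: hsum2; rewrite (bigD1 i0) //= [X in _ <= X](bigD1 i0) //=.
  have : \sum_(i < K | i != i0) (N (v (i + K.+1)%N - t *: v K) + N (v (K - i.+1)%N - t *: v K))
      <= \sum_(i < K | i != i0) (N (v (i + K.+1)%N) + N (v (K - i.+1)%N)).
    by apply: ler_sum => i _; apply: hb.
  rewrite add0n subn1; lra.
have [l0 m0 e0] := hspec i0; have [lT mT] := hT i0.
rewrite /= add0n subn1 in l0 m0 e0 lT mT.
have hsK : (K.+1 < size s)%N by rewrite hs; clear -hK; lia.
have hlK : (K.-1 < size s)%N by rewrite hs; clear -hK; lia.
have hKK : (K < size s)%N by rewrite hs; clear -hK; lia.
have h2 := pair_tight l0 m0 e0 t0 (ht1 _ l0 lT) (ht1 _ m0 mT) (hv0 _ hlK) (hv0 _ hsK) (hv0 _ hKK) hge.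
set vl := v K.-1 in h2 hge; set vr := v K.+1 in h2 hge.
have hl0 := hv0 _ hlK; have hr0 := hv0 _ hsK.
have nl := Ngt0 _ hl0; have nr := Ngt0 _ hr0.
have c0 : 0 < cr vl vr.
  have h := hord K.-1 K.+1 (leq_trans (leq_pred _) (leqnSn _)) hsK.
  rewrite lt_neqAle h andbT; apply/eqP => hc.
  have hp := par_P _ _ _ (hP _ hlK) (esym hc).
  move: h2; rewrite -/vl -/vr in hp *; rewrite hp unZ ?subrr ?N0.
  - by move/eqP; rewrite eq_sym pnatr_eq0.
  - by apply: divr_gt0; apply: hP.
  - exact: hl0.
set x := un vl; set y := - un vr.
have hx : N x = 1 by apply: Nun.
have hyy : N y = 1 by rewrite NN; apply: Nun.
have hxy : N (x + y) = 2 by [].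
have hD : cr x y < 0.
  rewrite /x /y crNr cr_un // oppr_lt0; apply: divr_gt0 => //; exact: mulr_gt0.
have hD0 : cr x y != 0 by apply: ltr0_neq0.
exists (Gof x y); split.
- by move=> z; apply: Gle.
- exists x; split; first by rewrite hx.
  rewrite Gval // ?cr_self ?mul0r ?divff //.
- move=> j hj.
  have hjs : (j < size s)%N by rewrite hs; clear -hj; lia.
  have hj0 := hv0 _ hjs; have nj := Ngt0 _ hj0.
  rewrite -{1}(unK _ hj0) dotpZ Gval ?Nun ?mulr1 //.
  + apply: negdiv => //; rewrite /y crNr cr_un // oppr_le0.
    apply: divr_ge0; [apply: hord => //; clear -hj; lia | by apply: ltW; apply: mulr_gt0].
  + apply: negdiv => //; rewrite /x cr_un // cr_anti mulNr oppr_le0.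
    apply: divr_ge0; [apply: hord => //; clear -hj; lia | by apply: ltW; apply: mulr_gt0].
- move=> j hj hjs.
  have hj0 := hv0 _ hjs; have nj := Ngt0 _ hj0.
  rewrite -{1}(unK _ hj0) dotpZ -[un (v j)]opprK.
  have -> : dotp (Gof x y) (- - un (v j)) = - dotp (Gof x y) (- un (v j)).
    by rewrite !dotpE !mxE; ring.
  rewrite Gval ?NN ?Nun ?mulrN ?mulr1 //.
  + apply: negdiv => //; rewrite /y crNl crNr opprK cr_un // cr_anti mulNr oppr_le0.
    apply: divr_ge0; [apply: hord => //; clear -hj; lia | by apply: ltW; apply: mulr_gt0].
  + apply: negdiv => //; rewrite /x crNr cr_un // oppr_le0.
    apply: divr_ge0; [apply: hord => //; clear -hj; lia | by apply: ltW; apply: mulr_gt0].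
Qed.


Lemma key_cr (f a b : pt) : 0 < dote f a -> 0 < dote f b ->
  cr f a / dote f a <= cr f b / dote f b -> 0 <= cr a b.
Proof.
move=> ha hb hk.
have hf : f != 0 by apply/eqP => h; move: ha; rewrite h /dote !mxE !mul0r addr0 ltxx.
have hs := u_sq_gt0 hf.
have e1 : dote f a * cr f b - cr f a * dote f b =
          dote f a * dote f b * (cr f b / dote f b - cr f a / dote f a).
  by field; apply/andP; split; apply: lt0r_neq0.
have e2 : dote f a * cr f b - cr f a * dote f b = (f 0 0 ^+ 2 + f 0 1 ^+ 2) * cr a b.
  by rewrite /dote /cr; ring.
have : 0 <= (f 0 0 ^+ 2 + f 0 1 ^+ 2) * cr a b.
  by rewrite -e2 e1; apply: mulr_ge0; [apply: ltW; apply: mulr_gt0 | lra].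
by rewrite pmulr_rge0.
Qed.

End Basics.

Arguments dote {R}. Arguments cr {R}. Arguments key_cr {R}. Arguments pt_eq {R}.
Arguments dotpE {R}. Arguments dotpZ {R}.
Arguments un {R}. Arguments support {R N}. Arguments Nun {R N}. Arguments Ngt0 {R N}.
Arguments NN {R N}. Arguments N0 {R N}. Arguments Ntri {R N}. Arguments Nge0 {R N}.
Arguments Nunit {R N}. Arguments get_phi {R}.

Theorem theorem4p6 (R : realType) (N : 'rV[R]_2 -> R) (k : nat)
    (A : seq 'rV[R]_2) (x0 : 'rV[R]_2) :
  is_norm N -> (0 < k)%N -> uniq A -> size A = (2 * k)%N -> x0 \in A ->
  FT_point N A x0 -> vertex_of_conv A x0 ->
  pseudo_double_cluster N A x0.
Proof.
move=> hN hk uA hsz hx0 hFT hvert.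
set others := rem x0 A.
have uO : uniq others by apply: rem_uniq.
have memO : forall z, (z \in others) = (z != x0) && (z \in A).
  by move=> z; rewrite /others (mem_rem_uniq _ uA) inE.
case: k hk hsz => [//|K] _ hsz.
have hszO : size others = (K.+1 + K)%N by rewrite /others size_rem // hsz; lia.
have [f hf] : exists f : 'rV[R]_2, forall a, a \in others -> 0 < dote f (x0 - a).
  by apply: get_phi => //; rewrite hsz; lia.
pose key (a : 'rV[R]_2) := cr f (x0 - a) / dote f (x0 - a).
pose leT := fun a b : 'rV[R]_2 => key a <= key b.
have leT_total : total leT by move=> a b; apply: le_total.
have leT_tr : transitive leT by move=> a b c; apply: le_trans.
have leT_refl : reflexive leT by move=> a; apply: lexx.
set s := sort leT others.
have pS : perm_eq s others by rewrite /s perm_sort.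
have uS : uniq s by rewrite (perm_uniq pS).
have hs : size s = (K.+1 + K)%N by rewrite (perm_size pS).
have memS : forall z, (z \in s) = (z \in others) by move=> z; apply: perm_mem.
have sortS : sorted leT s by apply: sort_sorted.
pose v j := x0 - nth 0 s j.
have hP : forall j, (j < size s)%N -> 0 < dote f (v j).
  by move=> j hj; apply: hf; rewrite -memS mem_nth.
have hord : forall i j, (i <= j)%N -> (j < size s)%N -> 0 <= cr (v i) (v j).
  move=> i j hij hj.
  have hi : (i < size s)%N by apply: leq_ltn_trans hj.
  apply: key_cr; [exact: hP|exact: hP|].
  exact: (sorted_leq_nth leT_tr leT_refl 0 sortS).
have hFT' : forall y, \sum_(a <- s) N (x0 - a) <= N (y - x0) + \sum_(a <- s) N (y - a).
  have eA : forall F : 'rV[R]_2 -> R, \sum_(a <- A) F a = F x0 + \sum_(a <- s) F a.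
    move=> F; rewrite (perm_big _ (perm_to_rem hx0)) big_cons -/others.
    by rewrite (perm_big _ pS).
  move=> y; have := hFT y; rewrite !eA subrr (N0 hN) add0r.
  done.
have hv0 : forall j, (j < size s)%N -> v j != 0.
  move=> j hj; apply/eqP => h; have := hP j hj.
  by rewrite h /dote !mxE !mulr0 addr0 ltxx.
have [G [HG1 HG2 HG3 HG4]] : exists G : 'rV[R]_2, [/\ forall z, dotp G z <= N z,
     exists z, N z <= 1 /\ dotp G z = 1,
     forall j, (j < K)%N -> dotp G (v j) = N (v j) &
     forall j, (K < j)%N -> (j < size s)%N -> dotp G (v j) = - N (v j)].
  case: (posnP K) => [K0|Kpos].
  - have h0 : (0 < size s)%N by rewrite hs.
    have [G [hG1 hG2]] := support hN _ (Nun hN _ (hv0 _ h0)).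
    exists G; split => //.
    + by exists (un N (v 0%N)); rewrite hG2 Nun // ?hv0.
    + by move=> j; rewrite K0.
    + by move=> j hj; rewrite hs K0; case: j hj => [|[|]].
  - exact: (@mainG R N hN x0 s K f).
pose xs (i : 'I_K) := nth 0 s (K.+1 + i).
pose ys (i : 'I_K) := nth 0 s i.
have hxs : forall i : 'I_K, (K.+1 + i < size s)%N.
  by move=> i; rewrite hs; have := ltn_ord i; clear; lia.
have hys : forall i : 'I_K, (i < size s)%N.
  by move=> i; rewrite hs; have := ltn_ord i; clear; lia.
have hd : forall i : 'I_K, N (xs i - ys i) = N (v i) + N (v (K.+1 + i)%N) /\
                            dotp G (xs i - ys i) = N (v i) + N (v (K.+1 + i)%N).
  move=> i.
  have e : xs i - ys i = v i - v (K.+1 + i)%N.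
    by rewrite /v /xs /ys; apply: pt_eq; rewrite !mxE; ring.
  have g : dotp G (xs i - ys i) = N (v i) + N (v (K.+1 + i)%N).
    have dB : forall a b, dotp G (a - b) = dotp G a - dotp G b.
      by move=> a b; rewrite !dotpE !mxE; ring.
    rewrite e dB HG3 ?ltn_ord // HG4 ?hxs // ?opprK //.
    by rewrite -addn1 addnC -addnA leq_addr.
  split => //; apply/eqP; rewrite eq_le; apply/andP; split.
  - by rewrite e; apply: le_trans (Ntri hN _ _) _; rewrite (NN hN).
  - by rewrite -g; apply: HG1.
exists K, xs, ys, (nth 0 s K); split.
- split.
  + rewrite /cluster_points cat_uniq !map_inj_uniq //.
    * apply/and3P; split; [exact: index_enum_uniq| |exact: index_enum_uniq].
      apply/hasPn => z /mapP [i _ ->]; apply/negP => /mapP [j _].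
      rewrite /xs /ys => /eqP; rewrite nth_uniq ?hxs ?hys // => /eqP h.
      by have := ltn_ord i; rewrite h; clear; lia.
    * move=> i j /eqP; rewrite /ys nth_uniq ?hxs ?hys // => /eqP h; exact: val_inj.
    * move=> i j /eqP; rewrite /xs nth_uniq ?hxs ?hys // => /eqP h; apply: val_inj.
      exact: (addnI h).
  + exists (fun z => unit_ball N z /\ dotp G z = 1); split.
    * exists G, 1; split => //.
      - apply/eqP => h; case: HG2 => z [_]; rewrite h dotpE !mxE !mul0r addr0 => /eqP.
        by rewrite eq_sym oner_eq0.
      - by move=> z hz; apply: le_trans (HG1 z) _.
    * move=> i; have [n1 n2] := hd i.
      have hpos : 0 < N (xs i - ys i).
        by rewrite n1; have := Ngt0 hN _ (hv0 _ (hys i)); have := Nge0 hN (v (K.+1 + i)%N); lra.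
      have hne : xs i - ys i != 0 by apply/eqP => h; move: hpos; rewrite h (N0 hN) ltxx.
      split; first by rewrite /unit_ball Nunit.
      by rewrite dotpZ n2 -n1 mulVf // lt0r_neq0.
- have cs : forall F : 'rV[R]_2 -> R, \sum_(a <- cluster_points xs ys) F a
      = \sum_(i <- enum 'I_K) (F (xs i) + F (ys i)).
    by move=> F; rewrite /cluster_points big_cat !big_map big_split.
  move=> y; rewrite !cs.
  apply: ler_sum => i _.
  have [n1 _] := hd i.
  have -> : N (x0 - xs i) + N (x0 - ys i) = N (xs i - ys i).
    by rewrite n1 addrC.
  have -> : xs i - ys i = (y - ys i) - (y - xs i) by apply: pt_eq; rewrite !mxE; ring.
  by apply: le_trans (Ntri hN _ _) _; rewrite (NN hN) addrC.
- move=> z; split.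
  + move=> hz; have [->|hzx] := eqVneq z x0; first by apply: Or32.
    have : z \in s by rewrite memS memO hzx hz.
    move=> hzs; have hj := index_mem z s; rewrite hzs in hj.
    have ez := nth_index 0 hzs.
    set j := index z s in hj ez.
    have [jK|jK|jK] := ltngtP j K.
    * apply: Or31; rewrite /cluster_points mem_cat; apply/orP; right.
      apply/mapP; exists (Ordinal jK); first by rewrite mem_enum.
      by rewrite /ys /= ez.
    * apply: Or31; rewrite /cluster_points mem_cat; apply/orP; left.
      have hi : (j - K.+1 < K)%N by move: hj; rewrite hs; clear -jK; lia.
      apply/mapP; exists (Ordinal hi); first by rewrite mem_enum.
      by rewrite /xs /= subnKC // ez.
    * by apply: Or33; rewrite -jK ez.
  + case=> [|->|->] //.
    * rewrite /cluster_points mem_cat => /orP [] /mapP [i _ ->].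
      - by apply: (mem_rem (x := x0)); rewrite -/others -memS mem_nth.
      - by apply: (mem_rem (x := x0)); rewrite -/others -memS mem_nth.
    * by apply: (mem_rem (x := x0)); rewrite -/others -memS mem_nth // hs; clear; lia.
Qed.
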